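(* Let $k \ge 1$, $m \ge 1$, and let $b(n) = \left\lfloor \frac{(n+1)^2}{8}\right\rfloor$ for $n \ge 0$. The number of odd Grassmannian involutions of $[m]$ that avoid $\operatorname{id}_k = 12\cdots k$ equals $b(m)$ if $m \le k$; equals $b(2k-m)$ if $k < m < 2k$ and $m-k$ is even; equals $b(2k-m-2)$ if $k < m < 2k$ and $m-k$ is odd; and equals $0$ if $m \ge 2k$.
   Context: A permutation is Grassmannian if it has at most one descent; a Grassmannian involution is a Grassmannian permutation $\pi$ with $\pi^{-1}=\pi$; it is odd if it has an odd number of inversions. A permutation avoids $12\cdots k$ if it has no increasing subsequence of length $k$. *)

(* Defs.v *)
(* Permutations of [m] are represented by 'S_m (positions and
   values 0..m-1, order-isomorphic to 1..m). *)
From mathcomp Require Import all_boot all_fingroup.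
Set Implicit Arguments. Unset Strict Implicit. Unset Printing Implicit Defensive.

Definition descents (m : nat) (s : 'S_m) : nat :=
  #|[set i : 'I_m | [exists j : 'I_m, (val j == (val i).+1) && (s j < s i)]]|.

Definition grassmannian (m : nat) (s : 'S_m) : bool := descents s <= 1.

Definition involution (m : nat) (s : 'S_m) : bool := (s^-1)%g == s.

Definition inversions (m : nat) (s : 'S_m) : nat :=
  #|[set p : 'I_m * 'I_m | (p.1 < p.2) && (s p.2 < s p.1)]|.

Definition odd_inv (m : nat) (s : 'S_m) : bool := odd (inversions s).

Definition contains_id (k m : nat) (s : 'S_m) : bool :=
  [exists f : {ffun 'I_k -> 'I_m},
     [forall i : 'I_k, forall j : 'I_k,
        (i < j) ==> ((f i < f j) && (s (f i) < s (f j))) ]].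

Definition avoids_id (k m : nat) (s : 'S_m) : bool := ~~ contains_id k s.

Definition count_odd_grass_inv_avoiding (k m : nat) : nat :=
  #|[set s : 'S_m | [&& grassmannian s, involution s, odd_inv s & avoids_id k s]]|.

Definition b (n : nat) : nat := (n.+1 ^ 2) %/ 8.

(* Main.v *)
Require Import Defs.
From mathcomp Require Import all_boot all_fingroup.
From mathcomp Require Import zify.
Set Implicit Arguments. Unset Strict Implicit. Unset Printing Implicit Defensive.

Definition Bs (M N : nat) := \sum_(0 <= c < N | odd c) (M - c.*2).

Lemma Bs_ext M N : M <= N -> Bs M N = Bs M M.
Proof.
move=> hMN; rewrite /Bs (big_cat_nat (leq0n M) hMN) /=.
rewrite [X in _ + X]big1_seq ?addn0 // => c /andP[_]; rewrite mem_iota => /andP[h _].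
apply/eqP; rewrite subn_eq0; lia.
Qed.

Lemma Bs_step M : Bs (M + 4) (M + 4) = Bs M M + (M + 2).
Proof.
rewrite /Bs big_mkcond big_ltn; last by lia.
rewrite big_ltn; last by lia.
rewrite /= (big_addn 0 (M + 4) 2) -big_mkcond /=.
have -> : \sum_(0 <= i < M + 4 - 2 | odd (i + 2)) (M + 4 - (i + 2).*2) = Bs M (M + 4 - 2).
  apply: eq_big => [c|c _]; first by rewrite oddD addbF.
  rewrite doubleD; lia.
rewrite Bs_ext; last by lia.
rewrite /Bs; lia.
Qed.

Lemma Bs_val M : Bs M M = M ^ 2 %/ 8.
Proof.
elim/ltn_ind: M => M IH.
case: (ltnP M 4) => hM.
  by case: M hM {IH} => [|[|[|[|]]]] //; rewrite /Bs unlock.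
have -> : M = (M - 4) + 4 by lia.
rewrite Bs_step IH; last by lia.
set x := M - 4.
have -> : (x + 4) ^ 2 = x ^ 2 + (x + 2) * 8 by rewrite !expnS !expn0; lia.
by rewrite divnDr ?dvdn_mull // mulnK.
Qed.

Lemma shift M N e : ~~ odd e -> e <= N ->
  \sum_(0 <= c < N | odd c && (e <= c)) (M - c.*2) = Bs (M - e.*2) (N - e).
Proof.
move=> he heN.
rewrite (big_cat_nat (leq0n e) heN) /= big1_seq ?add0n; last first.
  move=> c /andP[/andP[_ h]]; rewrite mem_iota; lia.
rewrite -{1}(add0n e) big_addn /Bs; apply: eq_big => [c|c _].
  by rewrite oddD (negbTE he) addbF leq_addl andbT.
rewrite doubleD; lia.
Qed.

Definition blk (a c i : nat) : nat :=
  if (a <= i) && (i < a + c) then i + c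
  else if (a + c <= i) && (i < a + c.*2) then i - c else i.

Lemma blk_spec a c i : (i < a -> blk a c i = i) /\ (a <= i < a + c -> blk a c i = i + c) /\
   (a + c <= i < a + c.*2 -> blk a c i = i - c) /\ (a + c.*2 <= i -> blk a c i = i).
Proof. rewrite /blk; do ! case: ifP; lia. Qed.

Lemma blkK a c i : blk a c (blk a c i) = i.
Proof. have := blk_spec a c i; have := blk_spec a c (blk a c i). lia. Qed.

Definition bl m a c i := if a + c.*2 <= m then blk a c i else i.

Lemma bl_lt m a c i : i < m -> bl m a c i < m.
Proof. rewrite /bl; case: ifP => // h; have := blk_spec a c i; lia. Qed.

Lemma blK m a c i : bl m a c (bl m a c i) = i.
Proof. rewrite /bl; case: (a + c.*2 <= m) => //; exact: blkK. Qed.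

Lemma val_insubd_lt m (u : 'I_m) x : x < m -> val (insubd u x) = x.
Proof. by rewrite val_insubd => ->. Qed.

Definition blkf m a c (i : 'I_m) : 'I_m := insubd i (bl m a c i).

Lemma blkfE m a c (i : 'I_m) : val (blkf a c i) = bl m a c i.
Proof. by rewrite val_insubd_lt // bl_lt. Qed.

Lemma blkf_inj m a c : injective (@blkf m a c).
Proof.
move=> x y h; apply: val_inj; rewrite -[val x](blK m a c) -[val y](blK m a c).
by rewrite -!blkfE h.
Qed.

Definition P m a c : 'S_m := perm (@blkf_inj m a c).

Lemma PE m a c (i : 'I_m) : val (P m a c i) = bl m a c i.
Proof. by rewrite permE blkfE. Qed.

Lemma PEb m a c (i : 'I_m) : a + c.*2 <= m -> val (P m a c i) = blk a c i.
Proof. by rewrite PE /bl => ->. Qed.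

Lemma card_ordP N (p : pred nat) : #|[set i : 'I_N | p i]| = count p (iota 0 N).
Proof.
by rewrite -sum1dep_card -(big_mkord p (fun _ => 1)) /index_iota subn0 sum1_count.
Qed.

Lemma count_int lo hi N : count (fun i => lo <= i < hi) (iota 0 N) = minn hi N - minn lo N.
Proof.
elim: N => [|N IH]; first by rewrite /= !minn0.
rewrite -addn1 iotaD count_cat IH /= add0n addn0.
case: (leqP lo N) => h1; case: (ltnP N hi) => h2 /=; lia.
Qed.

Lemma P_inv m a c : involution (P m a c).
Proof.
apply/eqP/permP => x.
have ss : P m a c (P m a c x) = x by apply: val_inj; rewrite !PE blK.
by rewrite -{1}ss permK.
Qed.

Lemma blk_desc a c i : blk a c i.+1 < blk a c i -> i.+1 = a + c.
Proof. rewrite /blk; do ! case: ifP; lia. Qed.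

Lemma P_grass m a c : a + c.*2 <= m -> grassmannian (P m a c).
Proof.
move=> h; rewrite /grassmannian /descents; apply/card_le1_eqP => x y.
rewrite !inE => /existsP[j /andP[/eqP hj hlt]] /existsP[j' /andP[/eqP hj' hlt']].
move: hlt hlt'; rewrite !PEb // hj hj' => /blk_desc h1 /blk_desc h2.
apply: val_inj; rewrite /= in h1 h2 *; lia.
Qed.

Lemma count_cint lo hi N :
  count (fun i => ~~ (lo <= i < hi)) (iota 0 N) = N - (minn hi N - minn lo N).
Proof.
elim: N => [|N IH]; first by rewrite /= !minn0.
rewrite -addn1 iotaD count_cat IH /= add0n addn0.
case: (leqP lo N) => h1; case: (ltnP N hi) => h2 /=; lia.
Qed.

Lemma blk_inv_pair a c i j : i < j ->
  (blk a c j < blk a c i) = ((a <= i < a + c) && (a + c <= j < a + c.*2)).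
Proof. move=> hij; apply/idP/idP; rewrite /blk; do ! case: ifP; lia. Qed.

Lemma P_invs m a c : a + c.*2 <= m -> inversions (P m a c) = c * c.
Proof.
move=> h; rewrite /inversions.
have -> : [set p : 'I_m * 'I_m | (p.1 < p.2) && (P m a c p.2 < P m a c p.1)] =
   setX [set i : 'I_m | a <= i < a + c] [set j : 'I_m | a + c <= j < a + c.*2].
  apply/setP => [[i j]]; rewrite !inE /= !PEb //.
  case: (ltnP i j) => hij /=; first by rewrite blk_inv_pair.
  apply/esym/negbTE; lia.
rewrite cardsX (card_ordP _ (fun i => a <= i < a + c)) (card_ordP _ (fun i => a + c <= i < a + c.*2)) !count_int.
have := addnn c; have -> : minn (a + c) m = a + c by lia.
have -> : minn a m = a by lia.
have -> : minn (a + c.*2) m = a + c.*2 by lia.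
move=> e; congr (_ * _); lia.
Qed.

Lemma P_contains k m a c : a + c.*2 <= m -> contains_id k (P m a c) = (k <= m - c).
Proof.
move=> h; have hc2 := addnn c; apply/idP/idP.
- case/existsP => f /forallP hf.
  have hf2 : forall i j : 'I_k, i < j ->
      (f i < f j) && (blk a c (f i) < blk a c (f j)).
    by move=> i j hij; have := implyP (forallP (hf i) j) hij; rewrite !PEb.
  have finj : injective f.
    move=> i j e; apply: val_inj; case: (ltngtP i j) => // hij.
      by have := hf2 _ _ hij; rewrite e ltnn.
    by have := hf2 _ _ hij; rewrite e ltnn.
  have hcard : #|f @: [set: 'I_k]| = k by rewrite card_imset // cardsT card_ord.
  case: (boolP [exists i, a <= f i < a + c]).
  + case/existsP => i0 hi0.
    have sub : f @: [set: 'I_k] \subset [set x : 'I_m | ~~ (a + c <= x < a + c.*2)].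
      apply/subsetP => y /imsetP[j _ ->]; rewrite inE; apply/negP => hj.
      have e1 : blk a c (f i0) = f i0 + c by rewrite /blk hi0.
      have e2 : blk a c (f j) = f j - c.
        rewrite /blk ifF ?hj //; apply/negbTE; lia.
      case: (ltngtP i0 j) => hij.
      * have := hf2 _ _ hij; rewrite e1 e2; lia.
      * have := hf2 _ _ hij; lia.
      * have e : i0 = j by apply: val_inj.
        move: hi0 hj; rewrite e; lia.
    have := subset_leq_card sub.
    rewrite hcard (card_ordP _ (fun x => ~~ (a + c <= x < a + c.*2))) count_cint.
    have -> : minn (a + c) m = a + c by lia.
    have -> : minn (a + c.*2) m = a + c.*2 by lia.
    lia.
  + rewrite negb_exists => /forallP hn.
    have sub : f @: [set: 'I_k] \subset [set x : 'I_m | ~~ (a <= x < a + c)].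
      by apply/subsetP => y /imsetP[j _ ->]; rewrite inE hn.
    have := subset_leq_card sub.
    rewrite hcard (card_ordP _ (fun x => ~~ (a <= x < a + c))) count_cint.
    have -> : minn (a + c) m = a + c by lia.
    have -> : minn a m = a by lia.
    lia.
- move=> hk; have hkm : k <= m by lia.
  apply/existsP; exists [ffun i : 'I_k => insubd (widen_ord hkm i)
                          (if i < a + c then (i : nat) else i + c)].
  apply/forallP => i; apply/forallP => j; apply/implyP => hij.
  have hi := ltn_ord i; have hj := ltn_ord j.
  rewrite !ffunE !PEb // !val_insubd_lt; last first.
    - by case: ifP; lia.
    - by case: ifP; lia.
  case: (ltnP i (a + c)) => hi'; case: (ltnP j (a + c)) => hj' /=;
    rewrite /blk; do ! case: ifP; lia.
Qed.

Lemma blk00 i : blk 0 0 i = i.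
Proof. by rewrite /blk ltn0 andbF. Qed.

Definition sg n (s : 'S_n.+1) (i : nat) : nat := s (inord i).

Lemma run (f : nat -> nat) lo hi :
  (forall i, lo <= i -> i.+1 <= hi -> f i < f i.+1) ->
  forall i j, lo <= i -> i <= j -> j <= hi -> f i + (j - i) <= f j.
Proof.
move=> H i j hlo; elim: j => [|j IH] hij hj.
  have -> : i = 0 by lia.
  by rewrite subnn addn0.
case: (ltngtP i j.+1) hij => // [hlt|heq] _.
  have := IH hlt (ltnW hj); have := H j (leq_trans hlo hlt) hj; lia.
by rewrite heq subnn addn0.
Qed.

Lemma char n (s : 'S_n.+1) : grassmannian s -> involution s ->
  exists a c, a + c.*2 <= n.+1 /\ s = P n.+1 a c.
Proof.
move=> hg hinv.
pose f := sg s.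
have ss : forall x, s (s x) = x.
  by move=> x; have := permK s x; rewrite (eqP hinv).
have F1 : forall i, f i <= n by move=> i; rewrite /f /sg -ltnS; exact: ltn_ord.
have F2 : forall i, i <= n -> f (f i) = i.
  by move=> i hi; rewrite /f /sg inord_val ss inordK.
have F3 : forall i j, i <= n -> j <= n -> f i = f j -> i = j.
  by move=> i j hi hj e; rewrite -(F2 i hi) -(F2 j hj) e.
have F4 : exists d, d <= n /\ forall i, i < n -> i != d -> f i < f i.+1.
  pose D := [set i : 'I_n.+1 | [exists j : 'I_n.+1, (val j == (val i).+1) && (s j < s i)]].
  have hD : #|D| <= 1 := hg.
  have key : forall i, i < n -> f i.+1 < f i -> inord i \in D.
    move=> i hi hlt; rewrite inE; apply/existsP; exists (inord i.+1).
    apply/andP; split; first by rewrite /= !inordK ?eqxx //; lia.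
    by move: hlt; rewrite /f /sg.
  have noeq : forall i, i < n -> f i <> f i.+1.
    by move=> i hi e; have := F3 _ _ (ltnW hi) hi e; lia.
  case: (pickP (mem D)) => [x hx | hnone].
  - exists (nat_of_ord x); split; first by rewrite -ltnS; exact: ltn_ord.
    move=> i hi hid; case: (ltngtP (f i) (f i.+1)) => // h.
      have hiD := key i hi h.
      have e := card_le1_eqP hD _ _ hx hiD.
      have hv : nat_of_ord (inord i : 'I_n.+1) = i by rewrite inordK //; lia.
      by move: hid; rewrite -hv e eqxx.
    by have := noeq i hi h.
  - exists 0; split => // i hi _; case: (ltngtP (f i) (f i.+1)) => // h.
      by have := hnone (inord i); rewrite /= key.
    by have := noeq i hi h.
case: F4 => d [hdn hd].
have runL : forall i j, i <= j -> j <= d -> f i + (j - i) <= f j.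
  move=> i j; apply: (run (lo := 0)) => // i' _ h; apply: hd; lia.
have runR : forall i j, d < i -> i <= j -> j <= n -> f i + (j - i) <= f j.
  move=> i j; apply: (run (lo := d.+1)) => i' h1 h2; apply: hd; lia.
have L : forall i, i <= d -> i <= f i.
  by move=> i hi; have := runL 0 i (leq0n _) hi; lia.
have R : forall j, d < j -> j <= n -> f j <= j.
  by move=> j h1 h2; have := runR j n h1 h2 (leqnn _); have := F1 n; lia.
have fxE : forall x : 'I_n.+1, val (s x) = f x by move=> x; rewrite /f /sg inord_val.
case: (boolP [exists i : 'I_n.+1, f i != i]) => [hex | hall]; last first.
  exists 0, 0; split => //; apply/permP => x; apply: val_inj.
  rewrite PEb // fxE; move: hall; rewrite negb_exists => /forallP/(_ x); rewrite negbK => /eqP ->.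
  by rewrite blk00.
have exP : exists i, (i <= n) && (f i != i).
  by case/existsP: hex => x hx; exists x; rewrite hx andbT; rewrite -ltnS; exact: ltn_ord.
case: (ex_minnP exP) => a /andP[han hfa] amin.
have fix_below : forall i, i < a -> f i = i.
  move=> i hi; apply/eqP/negP => /negP hne; have hin : i <= n by lia.
  by have := amin i; rewrite hne hin => /(_ isT); lia.
have had : a <= d.
  rewrite leqNgt; apply/negP => had.
  have hlt : f a < a by have := R a had han; move: hfa; lia.
  have h2 := fix_below _ hlt; have h1 := F2 a han; rewrite h2 in h1; move: hfa; lia.
have hfa_gt : d < f a.
  rewrite ltnNge; apply/negP => hle.
  have := L _ hle; rewrite F2 //; have := L a had; move: hfa; lia.
have hfa_eq : f a = d.+1.
  case: (ltngtP (f a) d.+1) => // h; first lia.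
  have := runR d.+1 (f a) (ltnSn d) (ltnW h) (F1 a); rewrite F2 // => h3.
  have hlt : f d.+1 < a by lia.
  have h4 := fix_below _ hlt; have h5 := F2 d.+1 (ltnW (leq_trans h (F1 a))).
  rewrite h4 in h5; lia.
have fd1 : f d.+1 = a by rewrite -hfa_eq F2.
have [c hc] : exists c, c = d.+1 - a by eexists.
have mid1 : forall i, a <= i <= d -> f i = i + c.
  move=> i /andP[h1 h2]; have A1 := runL a i h1 h2.
  have hj : d < f i by lia.
  have B := runR d.+1 (f i) (ltnSn d) hj (F1 i).
  rewrite F2 ?fd1 in B; lia.
have mid2 : forall j, d < j <= d + c -> f j = j - c.
  move=> j /andP[h1 h2]; have e := mid1 (j - c) (_ : a <= j - c <= d).
  have -> : j = f (j - c) by rewrite e; lia.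
  by rewrite F2; lia.
have above : forall j, d + c < j -> j <= n -> f j = j.
  move=> j h1 h2; apply/eqP/negP => /negP hne.
  have hle := R j (leq_ltn_trans (leq_addr c d) h1) h2.
  have hlt : f j < j by move: hne; lia.
  have hfj := F2 j h2.
  case: (ltnP d (f j)) => h3.
    by have := R (f j) h3 (F1 j); rewrite hfj; lia.
  case: (ltnP (f j) a) => h4.
    by have := fix_below _ h4; rewrite hfj; move: hne; lia.
  by have := mid1 (f j) (_ : a <= f j <= d); rewrite hfj; lia.
have hbound : a + c.*2 <= n.+1.
  by have := mid1 d (_ : a <= d <= d); have := F1 d; lia.
exists a, c; split => //; apply/permP => x; apply: val_inj.
rewrite PEb // fxE; have hx := ltn_ord x.
rewrite /blk; case: ifP => h1; first by rewrite mid1 //; lia.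
case: ifP => h2; first by rewrite mid2 //; lia.
case: (ltnP x a) => h3; first exact: fix_below.
apply: above; lia.
Qed.

Lemma count_le t N : count (fun a => a + t <= N) (iota 0 N.+1) = N.+1 - t.
Proof.
rewrite (eq_count (a2 := fun a => 0 <= a < N.+1 - t)); last by move=> a /=; lia.
rewrite count_int; lia.
Qed.

Lemma P_injD n (a c a' c' : nat) : odd c -> odd c' -> a + c.*2 <= n.+1 -> a' + c'.*2 <= n.+1 ->
  P n.+1 a c = P n.+1 a' c' -> a = a' /\ c = c'.
Proof.
move=> oc oc' hb hb' e.
have c1 : 0 < c by rewrite lt0n; apply: contraTneq oc => ->.
have c1' : 0 < c' by rewrite lt0n; apply: contraTneq oc' => ->.
have ha : a < n.+1 by have := addnn c; lia.
have ha' : a' < n.+1 by have := addnn c'; lia.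
have h := congr1 (fun s : 'S_n.+1 => val (s (inord a))) e.
have h' := congr1 (fun s : 'S_n.+1 => val (s (inord a'))) e.
rewrite /= !PEb // !inordK // in h h'.
move: h h'; have := addnn c; have := addnn c'; rewrite /blk; do ! case: ifP; lia.
Qed.

Lemma count_eq k n : count_odd_grass_inv_avoiding k n.+1 =
  \sum_(0 <= c < n.+2 | odd c && (n.+1 < k + c)) (n.+2 - c.*2).
Proof.
pose Dp := [set p : 'I_n.+2 * 'I_n.+2 | (odd p.1 && (n.+1 < k + p.1)) && (p.2 + (p.1 : nat).*2 <= n.+1)].
have E : [set s : 'S_n.+1 | [&& grassmannian s, involution s, odd_inv s & avoids_id k s]]
    = [set P n.+1 p.2 p.1 | p : 'I_n.+2 * 'I_n.+2 in Dp].
  apply/setP => s; rewrite inE; apply/idP/imsetP.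
  - case/and4P => hg hi ho ha.
    have [a [c [hb es]]] := char hg hi.
    have hc2 := addnn c.
    exists (inord c, inord a); last by rewrite /= !inordK //; lia.
    rewrite inE /= !inordK; try lia.
    move: ho ha; rewrite es /odd_inv /avoids_id P_invs // P_contains // oddM andbb => -> /=.
    lia.
  - case => [[c a]] hp ->; rewrite inE /= in hp; case/andP: hp => /andP[oc hk] hb.
    have hc2 := addnn c.
    apply/and4P; split.
    + exact: P_grass.
    + exact: P_inv.
    + by rewrite /odd_inv P_invs // oddM oc.
    + rewrite /avoids_id P_contains //; rewrite /=; lia.
rewrite /count_odd_grass_inv_avoiding E card_in_imset; last first.
  move=> [c a] [c' a']; rewrite !inE /= => /andP[/andP[oc _] hb] /andP[/andP[oc' _] hb'] e.
  have [e1 e2] := P_injD oc oc' hb hb' e.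
  by rewrite (val_inj e1) (val_inj e2).
rewrite /Dp -sum1dep_card.
rewrite -(pair_big_dep (fun c : 'I_n.+2 => odd c && (n.+1 < k + c))
                       (fun (c : 'I_n.+2) (a : 'I_n.+2) => a + (c : nat).*2 <= n.+1) (fun _ _ => 1)) /=.
rewrite big_mkord; apply: eq_bigr => c _.
by rewrite sum1dep_card (card_ordP _ (fun a => a + (c : nat).*2 <= n.+1)) count_le.
Qed.

Theorem mainTheorem20 (k m : nat) : 1 <= k -> 1 <= m ->
  [/\ (m <= k -> count_odd_grass_inv_avoiding k m = b m),
      (k < m < 2 * k -> ~~ odd (m - k) -> count_odd_grass_inv_avoiding k m = b (2 * k - m)),
      (k < m < 2 * k -> odd (m - k) -> count_odd_grass_inv_avoiding k m = b (2 * k - m - 2))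
    & (2 * k <= m -> count_odd_grass_inv_avoiding k m = 0)].
Proof.
case: m => [|n] // hk _.
have [r hr] : exists r, r = n.+1 - k by eexists.
have [e he] : exists e, e = r + odd r by eexists.
have pe : forall c, odd c && (n.+1 < k + c) = odd c && (e <= c).
  move=> c; case oc: (odd c) => //=; rewrite he; case ho: (odd r) => /=.
    by apply/idP/idP => ?; lia.
  have : c != r by apply/eqP => h; rewrite -h oc in ho.
  by move=> ?; apply/idP/idP => ?; lia.
have hev : ~~ odd e by rewrite he oddD; case: (odd r).
have F : count_odd_grass_inv_avoiding k n.+1 = (n.+2 - e.*2) ^ 2 %/ 8.
  rewrite count_eq (eq_bigl _ _ pe) shift //; last by case: (odd r) he; lia.
  by rewrite Bs_ext ?Bs_val //; lia.
rewrite F /b; split.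
- move=> hnk; have -> : e = 0 by rewrite he (_ : r = 0) //; lia.
  by rewrite subn0.
- move=> hm ho; rewrite -hr in ho.
  have -> : n.+2 - e.*2 = (2 * k - n.+1).+1.
    by rewrite he (negbTE ho) addn0; lia.
  by [].
- move=> hm ho; rewrite -hr in ho; rewrite ho /= in he.
  case: (ltnP 1 (2 * k - n.+1)) => h.
    by have -> : n.+2 - e.*2 = (2 * k - n.+1 - 2).+1 by lia.
  have -> : n.+2 - e.*2 = 0 by lia.
  by have -> : 2 * k - n.+1 - 2 = 0 by lia.
- move=> hm; have : n.+2 - e.*2 <= 1 by case: (odd r) he; lia.
  move: (n.+2 - e.*2) => x hx; rewrite divn_small //.
  by case: x hx => [|[|]].
Qed.
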